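(* Let $\mathbb Z^\infty=\bigoplus_{\mathbb N}\mathbb Z$ and, for a weight function $w:\mathbb N\to\mathbb R_{>0}$, let $d_w(x,y)=\sum_{j\ge0}w(j)|x_j-y_j|$. Then $(\mathbb Z^\infty,d_{w_1})$ with $w_1(n)=n+1$ and $(\mathbb Z^\infty,d_{w_2})$ with $w_2(n)=1$ are not coarsely equivalent: there are no coarse maps $f:(\mathbb Z^\infty,d_{w_1})\to(\mathbb Z^\infty,d_{w_2})$ and $g:(\mathbb Z^\infty,d_{w_2})\to(\mathbb Z^\infty,d_{w_1})$ such that $g\circ f$ is close to the identity of $\mathbb Z^\infty$ and $f\circ g$ is close to the identity of $\mathbb Z^\infty$.
   Context: $\mathbb Z^\infty$ is the set of integer sequences $(x_0,x_1,\dots)$ with only finitely many nonzero entries. A map $f:(X,d_X)\to(Y,d_Y)$ between metric spaces is coarse if it is uniformly expansive (for every $R>0$ there is $S>0$ with $d_Y(fx,fx')\le S$ whenever $d_X(x,x')\le R$) and metrically proper (preimages of bounded sets are bounded). Two maps $f,f':X\to Y$ are close if $\sup_{x}d_Y(fx,f'x)<\infty$. *)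

(* Defs.v *)
From HB Require Import structures.
From mathcomp Require Import all_boot all_order all_algebra.
Set Implicit Arguments. Unset Strict Implicit. Unset Printing Implicit Defensive.
Import Order.TTheory GRing.Theory Num.Theory.
Local Open Scope ring_scope.

(* Z^infty = finitely supported integer sequences, represented canonically
   as finite lists of integers with no trailing zeros
   (x_j = nth 0 s j; the empty list is the zero sequence). *)
Definition Zinf := {s : seq int | last 1 s != 0}.

Definition coord (x : Zinf) (j : nat) : int := nth 0 (val x) j.

(* Weighted l^1 metric d_w(x,y) = sum_j w(j) |x_j - y_j|; the sum is finite
   since coordinates beyond both supports vanish. *)
Definition dw (w : nat -> int) (x y : Zinf) : int :=
  \sum_(j < maxn (size (val x)) (size (val y))) w j * `|coord x j - coord y j|.

Definition w1 (n : nat) : int := (n.+1)%:Z.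
Definition w2 (n : nat) : int := 1.

Definition d1 := dw w1.
Definition d2 := dw w2.

Definition bounded (T : Type) (d : T -> T -> int) (B : T -> Prop) : Prop :=
  exists (c : T) (r : int), forall y, B y -> d c y <= r.

Definition uniformly_expansive (X Y : Type) (dX : X -> X -> int) (dY : Y -> Y -> int)
  (f : X -> Y) : Prop :=
  forall R : int, exists S : int, forall x x', dX x x' <= R -> dY (f x) (f x') <= S.

Definition metrically_proper (X Y : Type) (dX : X -> X -> int) (dY : Y -> Y -> int)
  (f : X -> Y) : Prop :=
  forall B : Y -> Prop, bounded dY B -> bounded dX (fun x => B (f x)).

Definition coarse (X Y : Type) (dX : X -> X -> int) (dY : Y -> Y -> int)
  (f : X -> Y) : Prop :=
  uniformly_expansive dX dY f /\ metrically_proper dX dY f.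

Definition close (X Y : Type) (dY : Y -> Y -> int) (f f' : X -> Y) : Prop :=
  exists C : int, forall x, dY (f x) (f' x) <= C.

(* Main.v *)
Require Import Defs.
From HB Require Import structures.
From mathcomp Require Import all_boot all_order all_algebra.
From mathcomp Require Import zify.
Import Order.TTheory GRing.Theory Num.Theory.
Local Open Scope ring_scope.

Lemma coord_default (x : Zinf) j : (size (val x) <= j)%N -> Defs.coord x j = 0.
Proof. by move=> h; rewrite /Defs.coord nth_default. Qed.

Lemma dw_ext (w : nat -> int) (x y : Zinf) N : (maxn (size (val x)) (size (val y)) <= N)%N ->
  dw w x y = \sum_(j < N) w j * `|Defs.coord x j - Defs.coord y j|.
Proof.
move=> hN; rewrite /dw.
rewrite -(big_mkord xpredT (fun j => w j * `|Defs.coord x j - Defs.coord y j|)).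
rewrite -(big_mkord xpredT (fun j => w j * `|Defs.coord x j - Defs.coord y j|)).
rewrite (big_cat_nat (leq0n _) hN) /=.
rewrite [X in _ = _ + X]big_nat_cond [X in _ = _ + X]big1 ?addr0 // => i /andP[/andP[hi _] _].
rewrite !coord_default ?subrr ?normr0 ?mulr0 //.
  by apply: leq_trans hi; apply: leq_maxr.
by apply: leq_trans hi; apply: leq_maxl.
Qed.

Lemma dw_term (w : nat -> int) (x y : Zinf) j : (forall i, 0 <= w i) ->
  w j * `|Defs.coord x j - Defs.coord y j| <= dw w x y.
Proof.
move=> hw.
have hN : (maxn (size (val x)) (size (val y)) <= maxn (maxn (size (val x)) (size (val y))) j.+1)%N
  by apply: leq_maxl.
rewrite (@dw_ext w x y _ hN).
have hj : (j < maxn (maxn (size (val x)) (size (val y))) j.+1)%N by apply: leq_maxr.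
rewrite (bigD1 (Ordinal hj)) //= lerDl.
by apply: sumr_ge0 => i _; apply: mulr_ge0.
Qed.

Lemma dw_sym (w : nat -> int) (x y : Zinf) : dw w x y = dw w y x.
Proof.
rewrite /dw maxnC; apply: eq_bigr => i _; by rewrite distrC.
Qed.

Lemma dw_tri (w : nat -> int) (x y z : Zinf) : (forall i, 0 <= w i) ->
  dw w x z <= dw w x y + dw w y z.
Proof.
move=> hw.
set N := maxn (maxn (size (val x)) (size (val y))) (size (val z)).
rewrite (@dw_ext w x z N) ?(@dw_ext w x y N) ?(@dw_ext w y z N); last first.
- rewrite /N; lia.
- rewrite /N; lia.
- rewrite /N; lia.
rewrite -big_split /=; apply: ler_sum => i _.
rewrite -mulrDr ler_wpM2l //.
have -> : Defs.coord x i - Defs.coord z i = (Defs.coord x i - Defs.coord y i) + (Defs.coord y i - Defs.coord z i)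
  by rewrite addrA subrK.
exact: ler_normD.
Qed.

Lemma pt_prop (M j : nat) : last 1 (rcons (nseq j (0:int)) (M.+1)%:Z) != 0.
Proof. by rewrite last_rcons. Qed.

Definition pt (M j : nat) : Zinf := exist (fun s : seq int => is_true (last 1 s != 0)) _ (pt_prop M j).

Lemma z0_prop : last 1 ([::] : seq int) != 0.
Proof. exact: oner_neq0. Qed.

Definition z0 : Zinf := exist (fun s : seq int => is_true (last 1 s != 0)) _ z0_prop.

Lemma coord_pt M j i : Defs.coord (pt M j) i = if i == j then (M.+1)%:Z else 0.
Proof.
rewrite /Defs.coord /= nth_rcons size_nseq.
case: ltngtP => h.
- by rewrite nth_nseq h.
- by [].
- by [].
Qed.

Lemma d2_z0_pt M j : d2 z0 (pt M j) = (M.+1)%:Z.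
Proof.
rewrite /d2 (@dw_ext w2 z0 (pt M j) j.+1); last by rewrite /= size_rcons size_nseq.
rewrite big_ord_recr /= big1 ?add0r.
  by rewrite coord_pt eqxx /Defs.coord /= nth_nil /w2 mul1r sub0r normrN.
move=> i _; rewrite coord_pt.
by rewrite (ltn_eqF (ltn_ord i)) /Defs.coord /= nth_nil subrr normr0 mulr0.
Qed.

Theorem proposition7p3p4 :
  ~ exists (f : Zinf -> Zinf) (g : Zinf -> Zinf),
      [/\ coarse d1 d2 f, coarse d2 d1 g,
          close d1 (fun x => g (f x)) (fun x => x)
        & close d2 (fun y => f (g y)) (fun y => y)].
Proof.
move=> [f [g [[ueF _] [ueG _] _ [C hC]]]].
have [S0 hS0] := ueF 0.
pose M : nat := (`|C| + `|C| + `|S0|)%N.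
have [S hS] := ueG (M.+1)%:Z.
pose p := g z0.
have hb : forall j, d1 p (g (pt M j)) <= S.
  by move=> j; apply: hS; rewrite d2_z0_pt.
have w1ge0 : forall i, 0 <= w1 i by [].
have Sge0 : 0 <= S.
  apply: le_trans (hb 0%N).
  by rewrite /d1 /dw; apply: sumr_ge0 => i _; apply: mulr_ge0.
have hfar : forall j i, (`|S| <= i)%N -> Defs.coord (g (pt M j)) i = Defs.coord p i.
  move=> j i hi; have := @dw_term w1 p (g (pt M j)) i w1ge0.
  move: (hb j); rewrite /d1 /w1 => h1 h2.
  have h3 := le_trans h2 h1.
  apply/eqP; rewrite eq_sym -subr_eq0; apply/negP => hne.
  set d := Defs.coord p i - Defs.coord (g (pt M j)) i in h3 hne.
  have hd : d != 0 by move: hne; case: (d == 0).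
  have hd1 : 1 <= `|d| by rewrite -normr_gt0 in hd; lia.
  have hSi : S < (i.+1)%:Z by lia.
  have : (i.+1)%:Z * 1 <= (i.+1)%:Z * `|d| by rewrite ler_pM2l.
  lia.
have hnear : forall j i, `|Defs.coord (g (pt M j)) i - Defs.coord p i| <= S.
  move=> j i; have := @dw_term w1 p (g (pt M j)) i w1ge0.
  move: (hb j); rewrite /d1 /w1 distrC => h1 h2.
  have h3 := le_trans h2 h1.
  have : (1 : int) * `|Defs.coord (g (pt M j)) i - Defs.coord p i|
     <= (i.+1)%:Z * `|Defs.coord (g (pt M j)) i - Defs.coord p i|.
    by rewrite ler_wpM2r.
  lia.
pose s := `|S|%N.
have hsS : s%:Z = S by rewrite /s; lia.
pose K := ((s + s).+1 ^ s).+1.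
pose h : 'I_K -> {ffun 'I_s -> 'I_(s + s).+1} := fun j =>
  [ffun i : 'I_s => inord (absz (Defs.coord (g (pt M j)) i - Defs.coord p i + S))].
have : ~~ injectiveb h.
  apply/negP => /injectiveP hinj; have := leq_card _ hinj.
  by rewrite card_ffun !card_ord ltnn.
move/injectivePn => [j [k hjk hh]].
have hcoord : forall i, Defs.coord (g (pt M j)) i = Defs.coord (g (pt M k)) i.
  move=> i; case: (ltnP i s) => hi.
  - have := congr1 (fun F : {ffun 'I_s -> 'I_(s + s).+1} => nat_of_ord (F (Ordinal hi))) hh.
    have hj1 := hnear j i; have hk1 := hnear k i.
    rewrite /= !ffunE /= !inordK.
    + lia.
    + lia.
    + lia.
  - by rewrite !hfar.
have hd1 : d1 (g (pt M j)) (g (pt M k)) <= 0.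
  by rewrite /d1 /dw big1 // => i _; rewrite hcoord subrr normr0 mulr0.
have hff := hS0 _ _ hd1.
have hjk' : (nat_of_ord j == nat_of_ord k) = false.
  by apply/negbTE.
have lower : (M.+1)%:Z <= d2 (pt M j) (pt M k).
  have := @dw_term w2 (pt M j) (pt M k) j (fun _ => ler01).
  by rewrite !coord_pt eqxx hjk' /w2 mul1r subr0.
have tri1 := @dw_tri w2 (pt M j) (f (g (pt M j))) (pt M k) (fun _ => ler01).
have tri2 := @dw_tri w2 (f (g (pt M j))) (f (g (pt M k))) (pt M k) (fun _ => ler01).
have c1 := hC (pt M j); have c2 := hC (pt M k).
rewrite /d2 dw_sym in c1.
rewrite /d2 in lower hff c2.
have hM : (M.+1)%:Z = `|C| + `|C| + `|S0| + 1 by rewrite /M; lia.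
lia.
Qed.
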